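(* Let $\phi,\psi:\mathbb{N}\cup\{0\}\to\mathbb{R}_+$ be such that $\phi$ and $\psi^{-1}$ (i.e. $n\mapsto\psi(n)^{-1}$) both satisfy: $\sum_kC^k\chi(k)(k!)^{-2}<\infty$ for every $C>0$. Then in each of the following cases $(E,F)$ with pairing $(\cdot,\cdot)$ is a dual pair satisfying $F\subseteq E'$ and $E\subseteq F'$: (1) $E=T_\phi(V)$, $F=T_\phi(V)$, $(\cdot,\cdot)=\langle\cdot,\cdot\rangle_\phi$; (2) $E=T_\phi(V)$, $F=T_{\psi^{-1}}(V)$, $(\cdot,\cdot)=\langle\cdot,\cdot\rangle_{\sqrt{\phi/\psi}}$.
   Context: $V$ is a finite-dimensional real inner product space, $\langle\cdot,\cdot\rangle_k$ the induced Hilbert–Schmidt inner product on $V^{\otimes k}$, $T(V)=\bigoplus_kV^{\otimes k}$. For $\chi:\mathbb{N}\cup\{0\}\to\mathbb{R}_+$, $\langle a,b\rangle_\chi=\sum_k\chi(k)\langle a_k,b_k\rangle_k$ and $T_\chi(V)$ is the Hilbert-space completion of $T(V)$ under this inner product (with its norm topology). A dual pair $(E,F)$ of linear spaces is a bilinear map $(\cdot,\cdot):E\times F\to\mathbb{R}$ such that $\{(e,\cdot):e\in E\}$ separates points of $F$ and $\{(\cdot,f):f\in F\}$ separates points of $E$; $F\subseteq E'$ means each functional $(\cdot,f)$ is continuous on $E$ (and similarly $E\subseteq F'$). *)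

(* Defs.v *)
From HB Require Import structures.
From mathcomp Require Import all_boot all_order all_algebra.
From mathcomp Require Import all_classical all_reals all_analysis.
Set Implicit Arguments. Unset Strict Implicit. Unset Printing Implicit Defensive.
Import Order.TTheory GRing.Theory Num.Theory.
Import numFieldNormedType.Exports.
Local Open Scope ring_scope.

(* V = R^d with its standard inner product (orthonormal basis 'I_d).
   V^{(x)k} is identified with the arrays indexed by words of length k over
   'I_d; the Hilbert-Schmidt inner product is the sum of coordinate products. *)
Definition tens (R : realType) (d k : nat) := k.-tuple 'I_d -> R.

Definition tseq (R : realType) (d : nat) := forall k : nat, tens R d k.

Definition hs (R : realType) (d k : nat) (x y : tens R d k) : R :=
  \sum_(w : k.-tuple 'I_d) x w * y w.

Definition tzero (R : realType) (d : nat) : tseq R d := fun k w => 0.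
Definition tadd (R : realType) (d : nat) (a b : tseq R d) : tseq R d :=
  fun k w => a k w + b k w.
Definition tscale (R : realType) (d : nat) (c : R) (a : tseq R d) : tseq R d :=
  fun k w => c * a k w.
Definition tsub (R : realType) (d : nat) (a b : tseq R d) : tseq R d :=
  fun k w => a k w - b k w.
Definition teq (R : realType) (d : nat) (a b : tseq R d) : Prop :=
  forall k w, a k w = b k w.

Definition wpair (R : realType) (d : nat) (chi : nat -> R) (a b : tseq R d) : R :=
  limn (series (fun k => chi k * hs (a k) (b k))).
(* the real limit of the partial sums; the series converges absolutely for
   a, b in the relevant spaces (Cauchy-Schwarz) *)

(* T_chi(V): the Hilbert space completion of T(V) under <.,.>_chi, realised
   concretely as the sequences with finite chi-weighted norm. *)
Definition inT (R : realType) (d : nat) (chi : nat -> R) (a : tseq R d) : Prop :=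
  cvgn (series (fun k => chi k * hs (a k) (a k))).

Definition wnorm (R : realType) (d : nat) (chi : nat -> R) (a : tseq R d) : R :=
  Num.sqrt (wpair chi a a).

Definition growth_cond (R : realType) (chi : nat -> R) : Prop :=
  forall C : R, 0 < C ->
    cvgn (series (fun k => C ^+ k * chi k / ((k`!)%:R ^+ 2))).

Definition lin_subspace (R : realType) (d : nat) (E : tseq R d -> Prop) : Prop :=
  E (@tzero R d) /\
  (forall c a b, E a -> E b -> E (tadd (tscale c a) b)).

Definition dual_pair (R : realType) (d : nat) (E F : tseq R d -> Prop)
    (p : tseq R d -> tseq R d -> R) : Prop :=
  lin_subspace E /\ lin_subspace F /\
      (forall c e1 e2 f, E e1 -> E e2 -> F f ->
         p (tadd (tscale c e1) e2) f = c * p e1 f + p e2 f) /\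
      (forall c e f1 f2, E e -> F f1 -> F f2 ->
         p e (tadd (tscale c f1) f2) = c * p e f1 + p e f2) /\
      (forall f1 f2, F f1 -> F f2 ->
         (forall e, E e -> p e f1 = p e f2) -> teq f1 f2) /\
      (forall e1 e2, E e1 -> E e2 ->
         (forall f, F f -> p e1 f = p e2 f) -> teq e1 e2).

Definition cont_on (R : realType) (d : nat) (E : tseq R d -> Prop)
    (nrm : tseq R d -> R) (g : tseq R d -> R) : Prop :=
  forall a, E a -> forall eps : R, 0 < eps ->
    exists2 delta : R, 0 < delta &
      forall a', E a' -> nrm (tsub a' a) < delta -> `|g a' - g a| < eps.

(* F \subseteq E' : every (.,f), f in F, is continuous on E *)
Definition sub_dualL (R : realType) (d : nat) (E F : tseq R d -> Prop)
    (nE : tseq R d -> R) (p : tseq R d -> tseq R d -> R) : Prop :=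
  forall f, F f -> cont_on E nE (fun e => p e f).

(* E \subseteq F' : every (e,.), e in E, is continuous on F *)
Definition sub_dualR (R : realType) (d : nat) (E F : tseq R d -> Prop)
    (nF : tseq R d -> R) (p : tseq R d -> tseq R d -> R) : Prop :=
  forall e, E e -> cont_on F nF (fun f => p e f).

(* Main.v *)
Require Import Defs.
From HB Require Import structures.
From mathcomp Require Import all_boot all_order all_algebra.
From mathcomp Require Import all_classical all_reals all_analysis.
From mathcomp Require Import ring lra.
Import Order.TTheory GRing.Theory Num.Theory.
Import numFieldNormedType.Exports.
Local Open Scope ring_scope.

Section S.
Local Open Scope classical_set_scope.
Local Open Scope ring_scope.
Variables (R : realType) (d : nat).
Implicit Types (a b x y f : tseq R d) (al be ga : nat -> R).

Lemma amgm (a b g x y : R) : 0 < a -> 0 <= b -> g ^+ 2 <= a * b ->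
  2 * (g * (x * y)) <= a * x ^+ 2 + b * y ^+ 2.
Proof.
move=> a0 b0 h.
have H : 0 <= a * (a * x ^+ 2 + b * y ^+ 2 - 2 * (g * (x * y))).
  have -> : a * (a * x ^+ 2 + b * y ^+ 2 - 2 * (g * (x * y))) =
     (a * x - g * y) ^+ 2 + (a * b - g ^+ 2) * y ^+ 2 by ring.
  by apply: addr_ge0; [exact: sqr_ge0| apply: mulr_ge0; [rewrite subr_ge0|exact: sqr_ge0]].
by move: H; rewrite pmulr_rge0 // subr_ge0.
Qed.

Lemma hsC k (x y : tens R d k) : hs x y = hs y x.
Proof. by apply: eq_bigr => w _; rewrite mulrC. Qed.

Lemma hs_ge0 k (x : tens R d k) : 0 <= hs x x.
Proof. by apply: sumr_ge0 => w _; rewrite -expr2 sqr_ge0. Qed.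

Lemma term_bound (a b g : R) k (x y : tens R d k) : 0 < a -> 0 <= b ->
  g ^+ 2 <= a * b -> `|g * hs x y| <= (a * hs x x + b * hs y y) / 2.
Proof.
move=> a0 b0 h.
have E1 : g * hs x y = \sum_w g * (x w * y w) by rewrite /hs mulr_sumr.
have E2 : (a * hs x x + b * hs y y) / 2 = \sum_w (a * x w ^+ 2 + b * y w ^+ 2) / 2.
  rewrite /hs !mulr_sumr -big_split mulr_suml; apply: eq_bigr => w _.
  by rewrite !expr2.
rewrite E1 E2 ler_norml; apply/andP; split.
  rewrite -sumrN; apply: ler_sum => w _.
  have := amgm _ _ _ (-x w) (y w) a0 b0 h; rewrite sqrrN; lra.
apply: ler_sum => w _; have := amgm _ _ _ (x w) (y w) a0 b0 h; lra.
Qed.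


Definition good al be ga := forall k, 0 < al k /\ 0 < be k /\ 0 < ga k /\ ga k ^+ 2 = al k * be k.

Lemma good_sym al be ga : good al be ga -> good be al ga.
Proof. by move=> h k; case: (h k) => [? [? [? e]]]; do !split => //; rewrite mulrC. Qed.

Lemma good_diag al : (forall k, 0 < al k) -> good al al al.
Proof. by move=> h k; do !split => //; rewrite expr2. Qed.

Definition bnd al be x y (t : R) := fun k =>
  (t * (al k * hs (x k) (x k)) + t^-1 * (be k * hs (y k) (y k))) / 2.

Lemma wbound al be ga x y t : good al be ga -> 0 < t -> forall k,
  `|ga k * hs (x k) (y k)| <= bnd al be x y t k.
Proof.
move=> g t0 k; case: (g k) => [a0 [b0 [c0 e]]].
have := @term_bound (t * al k) (t^-1 * be k) (ga k) k (x k) (y k).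
rewrite /bnd !mulrA; apply.
- by rewrite mulr_gt0.
- by rewrite mulr_ge0 // ?invr_ge0 ltW.
have tu : t \is a GRing.unit by rewrite unitfE gt_eqF.
by rewrite e (mulrC t) mulfK // gt_eqF.
Qed.

Lemma bnd_cvg al be x y t : inT al x -> inT be y ->
  cvgn (series (bnd al be x y t)) /\
  limn (series (bnd al be x y t)) = (t * wpair al x x + t^-1 * wpair be y y) / 2.
Proof.
move=> hx hy.
have -> : bnd al be x y t = 2^-1 *: (t *: (fun k => al k * hs (x k) (x k)) +
   t^-1 *: (fun k => be k * hs (y k) (y k))).
  by apply: funext => k; rewrite /bnd /= mulrC.
split.
  by apply: is_cvg_seriesZ; apply: is_cvg_seriesD; apply: is_cvg_seriesZ.
rewrite lim_seriesZ; last by apply: is_cvg_seriesD; apply: is_cvg_seriesZ.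
rewrite lim_seriesD; try by apply: is_cvg_seriesZ.
by rewrite !lim_seriesZ // mulrC.
Qed.

Lemma cvg_pair al be ga x y : good al be ga -> inT al x -> inT be y ->
  cvgn (series (fun k => ga k * hs (x k) (y k))).
Proof.
move=> g hx hy; apply: (@normed_cvg _ R^o).
apply: (@series_le_cvg _ _ (bnd al be x y 1)).
- by move=> n /=.
- by move=> n; have := wbound _ _ _ x y _ g ltr01 n; apply: le_trans.
- by move=> n; apply: wbound.
by case: (bnd_cvg _ _ _ _ 1 hx hy).
Qed.

Lemma pair_bound al be ga x y t : good al be ga -> inT al x -> inT be y -> 0 < t ->
  `|wpair ga x y| <= (t * wpair al x x + t^-1 * wpair be y y) / 2.
Proof.
move=> g hx hy t0.
have cn : cvgn [normed series (fun k => ga k * hs (x k) (y k))].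
  apply: (@series_le_cvg _ _ (bnd al be x y t)).
  - by move=> n /=.
  - by move=> n; have := wbound _ _ _ x y _ g t0 n; apply: le_trans.
  - by move=> n; apply: wbound.
  by case: (bnd_cvg _ _ _ _ t hx hy).
apply: le_trans (@lim_series_norm _ R^o _ cn) _.
case: (bnd_cvg _ _ _ _ t hx hy) => c <-.
apply: lim_series_le => //; exact: wbound.
Qed.

Lemma wpair_ge0 al x : (forall k, 0 < al k) -> inT al x -> 0 <= wpair al x x.
Proof.
move=> a0 hx; apply: limr_ge => //; near=> n.
by apply: sumr_ge0 => i _; rewrite mulr_ge0 ?hs_ge0 // ltW.
Unshelve. all: by end_near.
Qed.


Definition lc (c1 : R) a (c2 : R) b : tseq R d := fun k w => c1 * a k w + c2 * b k w.

Lemma lc_add c a b : tadd (tscale c a) b = lc c a 1 b.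
Proof.
apply: functional_extensionality_dep => k; apply: funext => w.
by rewrite /tadd /tscale /lc mul1r.
Qed.

Lemma lc_sub a b : tsub a b = lc 1 a (-1) b.
Proof.
apply: functional_extensionality_dep => k; apply: funext => w.
by rewrite /tsub /lc mul1r mulN1r.
Qed.

Lemma hs_lc c1 a c2 b k (y : tens R d k) :
  hs (lc c1 a c2 b k) y = c1 * hs (a k) y + c2 * hs (b k) y.
Proof.
rewrite /hs !mulr_sumr -big_split; apply: eq_bigr => w _.
by rewrite /lc mulrDl !mulrA.
Qed.

Lemma inT_lc al c1 a c2 b : (forall k, 0 < al k) -> inT al a -> inT al b ->
  inT al (lc c1 a c2 b).
Proof.
move=> a0 ha hb.
have g := good_diag _ a0; rewrite /inT.
have -> : (fun k => al k * hs (lc c1 a c2 b k) (lc c1 a c2 b k)) =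
  (c1 ^+ 2) *: (fun k => al k * hs (a k) (a k)) +
  ((2 * c1 * c2) *: (fun k => al k * hs (a k) (b k)) +
  (c2 ^+ 2) *: (fun k => al k * hs (b k) (b k))).
  apply: funext => k /=; rewrite !hs_lc [hs (a k) (lc _ _ _ _ _)]hsC.
  rewrite [hs (b k) (lc _ _ _ _ _)]hsC !hs_lc [hs (b k) (a k)]hsC.
  rewrite !fctE /=; rewrite /GRing.scale /=; ring.
apply: is_cvg_seriesD; first exact: is_cvg_seriesZ.
apply: is_cvg_seriesD; apply: is_cvg_seriesZ => //.
exact: (cvg_pair _ _ _ _ _ g).
Qed.

Lemma inT0 al : inT al (@tzero R d).
Proof.
rewrite /inT; apply: (is_cvg_near_cst 0); near=> n.
rewrite /series /=; apply: big1 => i _.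
by rewrite /hs big1 ?mulr0 // => w _; rewrite /tzero mulr0.
Unshelve. all: by end_near.
Qed.

Lemma wpairC ga x y : wpair ga x y = wpair ga y x.
Proof.
rewrite /wpair (_ : (fun k => ga k * hs (x k) (y k)) = (fun k => ga k * hs (y k) (x k))) //.
by apply: funext => k; rewrite hsC.
Qed.

Lemma wpair_lc al be ga c1 a c2 b y : good al be ga -> inT al a -> inT al b -> inT be y ->
  wpair ga (lc c1 a c2 b) y = c1 * wpair ga a y + c2 * wpair ga b y.
Proof.
move=> g ha hb hy.
rewrite /wpair.
have -> : (fun k => ga k * hs (lc c1 a c2 b k) (y k)) =
  c1 *: (fun k => ga k * hs (a k) (y k)) + c2 *: (fun k => ga k * hs (b k) (y k)).
  apply: funext => k /=; rewrite hs_lc !fctE /= /GRing.scale /=; ring.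
have ca := cvg_pair _ _ _ _ _ g ha hy; have cb := cvg_pair _ _ _ _ _ g hb hy.
rewrite lim_seriesD; try exact: is_cvg_seriesZ.
by rewrite !lim_seriesZ.
Qed.


Definition delta k (w : k.-tuple 'I_d) : tseq R d :=
  fun j v => if val v == val w then 1 else 0.

Lemma hs_delta_ne k w j (y : tens R d j) : j <> k -> hs (@delta k w j) y = 0.
Proof.
move=> ne; apply: big1 => v _; rewrite /delta; case: eqP => [e|_]; last by rewrite mul0r.
by exfalso; apply: ne; have := congr1 size e; rewrite !size_tuple.
Qed.

Lemma hs_delta_eq k w (y : tens R d k) : hs (@delta k w k) y = y w.
Proof.
rewrite /hs (bigD1 w) //= /delta eqxx mul1r big1 ?addr0 // => v vw.
by rewrite val_eqE (negbTE vw) mul0r.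
Qed.

Lemma series_single (u : nat -> R) k : (forall j, j <> k -> u j = 0) ->
  cvgn (series u) /\ limn (series u) = u k.
Proof.
move=> h.
have E : \forall n \near \oo, series u n = u k.
  near=> n.
  have kn : (k < n)%N by near: n; exists k.+1.
  rewrite /series /= big_mkord (bigD1 (Ordinal kn)) //= big1 ?addr0 // => i ik.
  apply: h => e; move: ik; rewrite -val_eqE /= e eqxx //.
split; [exact: (is_cvg_near_cst _ E) | exact: lim_near_cst E].
Unshelve. all: by end_near.
Qed.

Lemma sep al be ga (f1 f2 : tseq R d) : good al be ga -> inT be f1 -> inT be f2 ->
  (forall e, inT al e -> wpair ga e f1 = wpair ga e f2) -> teq f1 f2.
Proof.
move=> g h1 h2 H k w.
have de : inT al (@delta k w).
  rewrite /inT; apply: (proj1 (@series_single _ k _)) => j jk.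
  by rewrite hs_delta_ne // mulr0.
have ev f : wpair ga (@delta k w) f = ga k * f k w.
  rewrite /wpair (proj2 (@series_single _ k _)) ?hs_delta_eq // => j jk.
  by rewrite hs_delta_ne // mulr0.
have nz : ga k != 0 by case: (g k) => _ [_ [c _]]; rewrite gt_eqF.
by have := H _ de; rewrite !ev => /(mulfI nz).
Qed.

Lemma cont al be ga f : good al be ga -> inT be f ->
  cont_on (inT al) (wnorm al) (fun e => wpair ga e f).
Proof.
move=> g hf a ha eps e0.
have a0 k : 0 < al k by case: (g k).
have b0 k : 0 < be k by case: (g k) => _ [].
set B := wpair be f f.
have B0 : 0 <= B := wpair_ge0 _ _ b0 hf.
have B1 : 0 < B + 1 by lra.
set u := B + 1.
set q := eps / u.
have q0 : 0 < q by rewrite divr_gt0.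
exists q => // a' ha'; rewrite lc_sub => hn.
set x := lc 1 a' (-1) a.
have hx : inT al x := inT_lc _ _ _ _ _ a0 ha' ha.
have -> : wpair ga a' f - wpair ga a f = wpair ga x f.
  by rewrite (wpair_lc _ _ _ _ _ _ _ _ g ha' ha hf) mul1r mulN1r.
set A := wpair al x x.
have A0 : 0 <= A := wpair_ge0 _ _ a0 hx.
have As : A < q ^+ 2.
  move: hn; rewrite /wnorm -/A => hn.
  rewrite -(sqr_sqrtr A0); have := sqrtr_ge0 A; nra.
set p := u / eps.
have p0 : 0 < p by rewrite divr_gt0.
have pq : p * q = 1 by rewrite /p /q mulrA divfK ?gt_eqF // divff // gt_eqF.
have qu : q * u = eps by rewrite /q divfK // gt_eqF.
have qe : q <= eps by rewrite /q ler_pdivrMr // /u; nra.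
apply: le_lt_trans (pair_bound _ _ _ _ _ p g hx hf p0) _.
rewrite -/A -/B.
have -> : p^-1 = q by rewrite /p /q invf_div.
have h1 : p * A < q.
  have : p * A < p * q ^+ 2 by rewrite ltr_pM2l.
  by rewrite expr2 mulrA pq mul1r.
have h2 : q * B < eps by rewrite -qu ltr_pM2l // /u; lra.
lra.
Qed.

Lemma general al be ga : good al be ga ->
  dual_pair (@inT R d al) (@inT R d be) (wpair ga) /\
  sub_dualL (@inT R d al) (@inT R d be) (wnorm al) (wpair ga) /\
  sub_dualR (@inT R d al) (@inT R d be) (wnorm be) (wpair ga).
Proof.
move=> g; have g' := good_sym _ _ _ g.
have a0 k : 0 < al k by case: (g k).
have b0 k : 0 < be k by case: (g k) => _ [].
split; last split.
- split; first by split; [exact: inT0 | move=> c a b ha hb; rewrite lc_add; exact: inT_lc].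
  split; first by split; [exact: inT0 | move=> c a b ha hb; rewrite lc_add; exact: inT_lc].
  split.
    by move=> c e1 e2 f h1 h2 hf; rewrite lc_add (wpair_lc _ _ _ _ _ _ _ _ g h1 h2 hf) mul1r.
  split.
    move=> c e f1 f2 he h1 h2; rewrite lc_add !(wpairC _ e).
    by rewrite (wpair_lc _ _ _ _ _ _ _ _ g' h1 h2 he) mul1r.
  split.
    by move=> f1 f2 h1 h2 H; apply: (sep _ _ _ _ _ g h1 h2).
  move=> e1 e2 h1 h2 H; apply: (sep _ _ _ _ _ g' h1 h2) => f hf.
  by rewrite !(wpairC _ f); apply: H.
- by move=> f hf; exact: cont _ _ _ _ g hf.
move=> e he a ha eps e0.
have [del d0 H] := cont _ _ _ _ g' he a ha eps e0.
by exists del => // a' ha' hn; rewrite !(wpairC _ e); apply: H.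
Qed.

End S.

Theorem mainTheorem11 (R : realType) (d : nat) (phi psi : nat -> R)
  (phi_pos : forall k, 0 < phi k) (psi_pos : forall k, 0 < psi k)
  (Hphi : growth_cond phi) (Hpsi : growth_cond (fun k => (psi k)^-1)) :
  (dual_pair (@inT R d phi) (@inT R d phi) (wpair phi) /\
   sub_dualL (@inT R d phi) (@inT R d phi) (wnorm phi) (wpair phi) /\
   sub_dualR (@inT R d phi) (@inT R d phi) (wnorm phi) (wpair phi)) /\
  (let psiinv := fun k => (psi k)^-1 in
   let p := wpair (fun k => Num.sqrt (phi k / psi k)) in
   dual_pair (@inT R d phi) (@inT R d psiinv) p /\
   sub_dualL (@inT R d phi) (@inT R d psiinv) (wnorm phi) p /\
   sub_dualR (@inT R d phi) (@inT R d psiinv) (wnorm psiinv) p).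
Proof.
split; first by apply: (@general R d); apply: good_diag.
move=> psiinv p; apply: (@general R d) => k; do !split.
- exact: phi_pos.
- by rewrite /psiinv invr_gt0.
- by rewrite sqrtr_gt0 divr_gt0.
- by rewrite sqr_sqrtr // ltW // divr_gt0.
Qed.
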